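(* Let $\mathcal{T}=(\mathbb{K}_i,\phi_i)_{i=0,\dots,m}$ be a tower with $\mathbb{K}_0=\emptyset$ whose maps are elementary inclusions or elementary contractions, named according to the naming convention below, and let $\hat{\mathbb{K}}_0,\dots,\hat{\mathbb{K}}_m$ be the active small coning construction. For every $i$, a simplex $\sigma$ belongs to $\mathbb{K}_i$ if and only if $\sigma$ is an active simplex of $\hat{\mathbb{K}}_i$.
   Context: Elementary inclusion: $\mathbb{K}_{i+1}=\mathbb{K}_i\cup\{\sigma\}$, $\sigma\notin\mathbb{K}_i$, $\phi_i$ the inclusion. Elementary contraction of distinct vertices $u,v$ of $\mathbb{K}_i$: for one of them, say $v$, the vertex set of $\mathbb{K}_{i+1}$ is that of $\mathbb{K}_i$ minus $v$, $\phi_i(u)=\phi_i(v)=u$, $\phi_i$ is the identity on other vertices, and $\mathbb{K}_{i+1}=\phi_i(\mathbb{K}_i)$. Active small coning construction: $\hat{\mathbb{K}}_0=\emptyset$; vertices flagged active/inactive, a simplex is active iff all its vertices are; $\mathrm{Act}\overline{\mathrm{St}}(w,\hat{\mathbb{K}}_i)$ = active simplices of $\hat{\mathbb{K}}_i$ in the closed star of $w$ (all faces of simplices containing $w$). Inclusion of $\sigma$: $\hat{\mathbb{K}}_{i+1}=\hat{\mathbb{K}}_i\cup\{\sigma\}$, a new vertex marked active. Contraction of $u,v$: if $|\mathrm{Act}\overline{\mathrm{St}}(u,\hat{\mathbb{K}}_i)|\le|\mathrm{Act}\overline{\mathrm{St}}(v,\hat{\mathbb{K}}_i)|$, $\hat{\mathbb{K}}_{i+1}=\hat{\mathbb{K}}_i\cup\{\{v\}\cup\tau:\tau\in\mathrm{Act}\overline{\mathrm{St}}(u,\hat{\mathbb{K}}_i)\}$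 and $u$ is marked inactive; otherwise the same with $u,v$ exchanged. Naming convention: each contraction maps $u$ and $v$ to the vertex not marked inactive in that step. *)

(* Defs.v *)
From mathcomp Require Import all_boot.
From mathcomp Require Import finmap.

Set Implicit Arguments.
Unset Strict Implicit.
Unset Printing Implicit Defensive.

Local Open Scope fset_scope.

Definition simplex := {fset nat}.
Definition cplx := {fset {fset nat}}.

(* An elementary map of the tower: inclusion of a simplex, or contraction of
   two vertices u, v (which of the two survives is fixed by the naming
   convention, i.e. by the active small coning construction). *)
Inductive op := Incl of {fset nat} | Contr of nat & nat.

(* State after i steps: the tower complex K_i, the coned complex hat K_i,
   and the set of active vertices of hat K_i. *)
Record state := State { K : cplx; Kh : cplx; act : {fset nat} }.

Definition state0 : state := State fset0 fset0 fset0.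

Definition cstar (w : nat) (C : cplx) : cplx :=
  [fset t in \big[fsetU/fset0]_(r <- C | w \in r) fpowerset r | t != fset0].

Definition ActSt (w : nat) (C : cplx) (A : {fset nat}) : cplx :=
  [fset t in cstar w C | t `<=` A].

Definition contract_map (d k : nat) (x : nat) : nat := if x == d then k else x.
Definition contract_cplx (d k : nat) (C : cplx) : cplx :=
  [fset [fset contract_map d k x | x in (s : {fset nat})] | s in C].

Definition cone_step (d k : nat) (st : state) : state :=
  State (contract_cplx d k (K st))
        (Kh st `|` [fset (k |` (t : {fset nat})) | t in ActSt d (Kh st) (act st)])
        (act st `\ d).

Definition step (st : state) (o : op) : state :=
  match o with
  | Incl s => State (K st `|` [fset s]) (Kh st `|` [fset s])
                    (if #|` s| == 1 then act st `|` s else act st)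
  | Contr u v =>
      if #|` ActSt u (Kh st) (act st)| <= #|` ActSt v (Kh st) (act st)|
      then cone_step u v st
      else cone_step v u st
  end.

Definition state_at (ops : seq op) (i : nat) : state :=
  foldl step state0 (take i ops).

Definition valid_step (ops : seq op) (i : nat) : Prop :=
  let st := state_at ops i in
  match nth (Incl fset0) ops i with
  | Incl s =>
      [/\ s != fset0, s \notin K st,
          (forall t : {fset nat}, t != fset0 -> t `<` s -> t \in K st)
          (* K_{i+1} = K_i u {s} is a simplicial complex *)
        & (#|` s| = 1 -> forall j, j <= i -> forall r, r \in K (state_at ops j) ->
              [disjoint s & r])]  (* an included vertex is a new vertex *)
  | Contr u v => [/\ u != v, [fset u] \in K st & [fset v] \in K st]
  end.

Definition tower_ok (ops : seq op) : Prop :=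
  forall i, i < size ops -> valid_step ops i.

(* Main.v *)
Require Import Defs.
From mathcomp Require Import all_boot.
From mathcomp Require Import finmap.
Local Open Scope fset_scope.
Set Implicit Arguments.

Lemma cstarP w C t : t \in cstar w C <-> t != fset0 /\ exists2 r, r \in C & (w \in r) && (t `<=` r).
Proof.
rewrite /cstar !inE /=. split.
- case/andP=> /bigfcupP [r /andP[rC wr] tr] t0; split=> //; exists r => //.
  by rewrite wr -fpowersetE.
- case=> t0 [r rC /andP[wr tr]]; rewrite t0 andbT; apply/bigfcupP; exists r.
  by rewrite rC. by rewrite fpowersetE.
Qed.

Lemma ActStP w C A t : t \in ActSt w C A <-> (t \in cstar w C /\ t `<=` A).
Proof. by rewrite /ActSt !inE; split => [/andP[]|[-> ->]]. Qed.

Lemma contract_out d k s : d \notin s -> [fset contract_map d k x | x in s] = s.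
Proof.
move=> ds; apply/fsetP => y; apply/imfsetP/idP => [[x xs ->]|ys].
  by rewrite /contract_map; case: eqP => [e|//]; rewrite -e xs in ds.
exists y => //; rewrite /contract_map; case: eqP => // e; by rewrite -e ys in ds.
Qed.

Lemma contract_in d k s : d \in s -> [fset contract_map d k x | x in s] = k |` (s `\ d).
Proof.
move=> ds; apply/fsetP => y; rewrite !inE; apply/imfsetP/idP => [[x xs ->]|].
  rewrite /contract_map; case: (x =P d) => [_|/eqP xd]; first by rewrite ?eqxx.
  by rewrite xd xs orbT.
case/orP => [/eqP ->|/andP[yd ys]]; first by exists d => //; rewrite /contract_map eqxx.
by exists y => //; rewrite /contract_map (negbTE yd).
Qed.

Definition Inv (st : state) :=
  (forall s : {fset nat}, s \in K st <-> s \in Kh st /\ s `<=` act st) /\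
  (forall r t : {fset nat}, r \in Kh st -> t != fset0 -> t `<=` r -> t \in Kh st).

Lemma Kh_cone d k st r : r \in Kh (cone_step d k st) ->
  r \in Kh st \/ exists2 t, t \in ActSt d (Kh st) (act st) & r = k |` t.
Proof. by rewrite /= inE => /orP [->|/imfsetP [t tA ->]]; [left|right; exists t]. Qed.

Lemma ActSt_inv d (C : cplx) (A : {fset nat}) (t : {fset nat}) : t \in ActSt d C A ->
  [/\ t != fset0, t `<=` A & exists2 r, r \in C & (d \in r) && (t `<=` r)].
Proof. by case/ActStP => /cstarP [t0 [r rC H]] tA; split=> //; exists r. Qed.

Lemma ActSt_mk d (C : cplx) (A : {fset nat}) (t r : {fset nat}) : t != fset0 -> t `<=` A -> r \in C -> d \in r -> t `<=` r ->
  t \in ActSt d C A.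
Proof. move=> t0 tA rC dr tr; apply/ActStP; split=> //; apply/cstarP; split=> //.
by exists r => //; rewrite dr tr. Qed.
Arguments ActSt_mk {d C A t r}.

Lemma cone_inv d k st : Inv st -> d != k -> [fset d] \in K st -> [fset k] \in K st ->
  Inv (cone_step d k st).
Proof.
case=> IK CL dk dK kK.
have [dKh dA] := (IK _).1 dK; have [kKh kA] := (IK _).1 kK.
rewrite fsub1set in dA; rewrite fsub1set in kA.
split.
- move=> s; split.
  + case/imfsetP => s0 /= s0K ->.
    have [s0Kh s0A] := (IK _).1 s0K.
    have [ds0|nds0] := boolP (d \in s0).
    * rewrite contract_in //; split; last first.
        apply/fsubsetP => x; rewrite !inE => /orP [/eqP ->|/andP[xd xs]].
          by rewrite eq_sym dk kA.
        by rewrite xd (fsubsetP s0A).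
      rewrite /= inE; have [e|ne] := eqVneq (s0 `\ d) fset0.
        by rewrite e fsetU0 kKh.
      apply/orP; right; apply/imfsetP; exists (s0 `\ d) => //=.
      apply: (ActSt_mk ne _ s0Kh ds0); last exact: fsubsetDl.

      exact: fsubset_trans (fsubsetDl _ _) s0A.
    * rewrite contract_out //= inE s0Kh; split => //.
      by apply/fsubsetD1P.
  + rewrite [act _]/= => -[/Kh_cone [sKh|[t tA ->]] /fsubsetD1P [sA ds]].
    * have sK := (IK s).2 (conj sKh sA).
      by apply/imfsetP; exists s => //; rewrite contract_out.
    * case/ActSt_inv: tA => t0 tA [r rKh /andP[dr tr]].
      have dt : d \notin t by apply: contra ds => dt; rewrite inE dt orbT.
      have s0Kh : d |` t \in Kh st.
        apply: (CL r (d |` t) rKh); last by rewrite fsubUset fsub1set dr tr.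
        by apply/eqP => e; have := fset1U1 d t; rewrite e inE.
      have s0K : d |` t \in K st.
        by apply/IK; split=> //; rewrite fsubUset fsub1set dA tA.
      apply/imfsetP; exists (d |` t) => //.
      by rewrite contract_in ?fset1U1 // fsetU1K.
- move=> r t /Kh_cone [rKh|[t0 tA ->]] tn0 tr.
    by rewrite /= inE (CL r).
  case/ActSt_inv: (tA) => t00 t0A [r0 r0Kh /andP[dr0 t0r0]].
  have [kt|nkt] := boolP (k \in t); last first.
    have tt0 : t `<=` t0.
      apply/fsubsetP => x xt; move: (fsubsetP tr x xt); rewrite !inE.
      by case/orP => // /eqP e; rewrite -e xt in nkt.
    by rewrite /= inE (CL r0) //; apply: fsubset_trans tt0 t0r0.
  have [e|ne] := eqVneq (t `\ k) fset0.
    have -> : t = [fset k].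
      apply/fsetP => x; rewrite inE; apply/idP/eqP => [xt|->//].
      apply/eqP; apply: contraT => xk.
      by have := in_fset0 x; rewrite -e !inE xk xt.
    by rewrite /= inE kKh.
  rewrite /= inE; apply/orP; right; apply/imfsetP; exists (t `\ k); last by rewrite fsetD1K.
  have tt0 : t `\ k `<=` t0.
    apply/fsubsetP => x; rewrite !inE => /andP [xk xt]; move: (fsubsetP tr x xt).
    by rewrite !inE (negbTE xk).
  apply: (ActSt_mk ne _ r0Kh dr0). exact: fsubset_trans tt0 t0A.
  exact: fsubset_trans tt0 t0r0.
Qed.

Definition hist ops i := forall r : {fset nat}, r \in Kh (state_at ops i) -> forall x, x \in r ->
  exists j, j <= i /\ exists2 r' : {fset nat}, r' \in K (state_at ops j) & x \in r'.

Lemma state_atS ops i : i < size ops ->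
  state_at ops i.+1 = step (state_at ops i) (nth (Incl fset0) ops i).
Proof. by move=> lt; rewrite /state_at (take_nth (Incl fset0)) // foldl_rcons. Qed.

Lemma hist_cone ops i d k : hist ops i -> [fset k] \in K (state_at ops i) ->
  forall r : {fset nat}, r \in Kh (cone_step d k (state_at ops i)) -> forall x, x \in r ->
  exists j, j <= i.+1 /\ exists2 r' : {fset nat}, r' \in K (state_at ops j) & x \in r'.
Proof.
move=> H kK r /Kh_cone [rKh|[t tA ->]] x xr.
  by have [j [ji R]] := H r rKh x xr; exists j; split=> //; apply: leqW.
move: xr; rewrite !inE => /orP [/eqP ->|xt].
  by exists i; split=> //; exists [fset k] => //; rewrite inE.
case/ActSt_inv: tA => _ _ [r0 r0Kh /andP[_ tr0]].
have [j [ji R]] := H r0 r0Kh x (fsubsetP tr0 x xt).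
by exists j; split=> //; apply: leqW.
Qed.

Lemma main_inv ops : tower_ok ops -> forall i, i <= size ops ->
  Inv (state_at ops i) /\ hist ops i.
Proof.
move=> tow; elim=> [|i IH] lt.
  rewrite /hist /state_at take0 /=; split; last by move=> r; rewrite inE.
  by split=> [s|r t]; rewrite !inE //; split=> [|[]].
have lti : i < size ops by [].
have [[IK CL] H] := IH (ltnW lt).
have V := tow i lti; rewrite /valid_step in V.
have SS := @state_atS ops i lti.
move: V SS; case E: (nth (Incl fset0) ops i) => [s|u v] V SS.
- case: V => s0 snK faces new.
  set st := state_at ops i in IK CL s0 snK faces new SS.
  have Hst : hist ops i by [].
  have sKst1 : s \in K (state_at ops i.+1) by rewrite SS /= inE inE eqxx orbT.
  rewrite /hist SS /=.
  set A' := (if #|` s| == 1 then act st `|` s else act st).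
  have AA' : act st `<=` A' by rewrite /A'; case: ifP => _; rewrite ?fsubsetUl ?fsubset_refl.
  have faceK : forall t : {fset nat}, t != fset0 -> t `<=` s -> t != s -> t \in K st.
    by move=> t t0 ts tns; apply: faces => //; rewrite fproperEneq tns ts.
  have sA : s `<=` A'.
    rewrite /A'; case: ifP => [_|c1]; first by rewrite fsubsetUr.
    apply/fsubsetP => x xs.
    have xK : [fset x] \in K st.
      apply: faceK; first by apply/eqP => e; have := fset1U1 x fset0; rewrite fsetU0 e inE.
        by rewrite fsub1set.
      by apply: contraFN c1 => /eqP <-; rewrite cardfs1.
    by have [_ /fsubsetP] := (IK _).1 xK; apply; rewrite inE.
  split; first split.
  + move=> t; rewrite !inE; split.
      case/orP => [tK|/eqP ->]; last by rewrite eqxx orbT.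
      have [tKh tA] := (IK _).1 tK; rewrite tKh; split=> //; exact: fsubset_trans tA AA'.
    case=> /orP [tKh|/eqP ->] tA'; last by rewrite eqxx orbT.
    apply/orP; left; apply/IK; split=> //.
    move: tA'; rewrite /A'; case: ifP => // /cardfs1P [x sx] tA'.
    apply/fsubsetP => y yt; move: (fsubsetP tA' y yt); rewrite inE => /orP [//|ys].
    have [j [ji [r' r'K yr']]] := Hst t tKh y yt.
    have c1 : #|` s| = 1 by rewrite sx cardfs1.
    have := new c1 j ji r' r'K; move=> /fdisjointP /(_ y ys).
    by rewrite yr'.
  + move=> r t; rewrite !inE => /orP [rKh|/eqP ->] t0 tr; first by rewrite (CL r).
    have [->|tns] := eqVneq t s; first by rewrite orbT.
    by have [-> _] := (IK _).1 (faceK t t0 tr tns).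
  + move=> r; rewrite !inE => /orP [rKh|/eqP ->] x xr.
      by have [j [ji R]] := H r rKh x xr; exists j; split=> //; apply: leqW.
    by exists i.+1; split=> //; exists s.
- case: V => uv uK vK.
  rewrite /hist SS /=; case: ifP => _.
    split; first exact: cone_inv.
    exact: hist_cone.
  split; first by apply: cone_inv => //; rewrite eq_sym.
  exact: hist_cone.
Qed.

Theorem lemma4 (ops : seq op) :
  tower_ok ops ->
  forall i, i <= size ops ->
  forall s : {fset nat},
    s \in K (state_at ops i) <->
    (s \in Kh (state_at ops i) /\ s `<=` act (state_at ops i)).
Proof. by move=> tow i lt s; have [[IK _] _] := @main_inv ops tow i lt; apply: IK. Qed.
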